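(* Let $z$ be a real function of one real variable, twice continuously differentiable near $t=0$ with $\dot z(0)\neq0$, and let $f(u_+,u_-)$ be defined near $(0,0)$ implicitly by $$f=\frac{2u_+}{\dot z(t)}+z(t),\qquad u_-=\frac{u_+}{\dot z(t)^2}+t,$$ with $t=t(u_+,u_-)$ the solution of the second equation near $t=0$. Then $f$ satisfies (i) $f$ is analytic near $(u_+,u_-)=(0,0)$ and (ii) $f(u_+,u_-)=u_++u_-+O(|u_\pm|^2)$, if and only if $z$ is analytic near $t=0$ and $z(t)=t+O(t^2)$.
   Context: $\dot z$ denotes the derivative of $z$; analytic near a point means given by a convergent power series on a neighborhood of that point; $O(|u_\pm|^2)$ denotes terms of total order at least two in $(u_+,u_-)$. *)

(* Defs.v *)
From Stdlib Require Import Reals Lra.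
From Coquelicot Require Import Coquelicot.
Open Scope R_scope.

Definition C2_near0 (z : R -> R) : Prop :=
  exists d, 0 < d /\ forall x, Rabs x < d ->
    ex_derive z x /\ ex_derive (Derive z) x /\ continuous (Derive_n z 2) x.

Definition analytic1_near0 (z : R -> R) : Prop :=
  exists (a : nat -> R) (r : R), 0 < r /\ forall x, Rabs x < r ->
    ex_series (fun n => Rabs (a n) * Rabs x ^ n) /\
    z x = Series (fun n => a n * x ^ n).

(* f is analytic near (0,0): given by a double power series centred at (0,0),
   converging absolutely on a neighbourhood (polydisc) of (0,0).  The series is
   summed by total degree. *)
Definition analytic2_near0 (f : R -> R -> R) : Prop :=
  exists (a : nat -> nat -> R) (r : R), 0 < r /\ forall x y,
    Rabs x < r -> Rabs y < r ->
    ex_series (fun n => sum_f_R0 (fun i => Rabs (a i (n - i)%nat) * Rabs x ^ i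
                                             * Rabs y ^ (n - i)) n) /\
    f x y = Series (fun n => sum_f_R0 (fun i => a i (n - i)%nat * x ^ i
                                                 * y ^ (n - i)) n).

Definition id_plus_O2_1 (z : R -> R) : Prop :=
  exists C d, 0 < d /\ forall x, Rabs x < d -> Rabs (z x - x) <= C * x ^ 2.

Definition sum_plus_O2_2 (f : R -> R -> R) : Prop :=
  exists C d, 0 < d /\ forall x y, Rabs x < d -> Rabs y < d ->
    Rabs (f x y - (x + y)) <= C * (x ^ 2 + y ^ 2).

Definition local_solution (z : R -> R) (tt : R -> R -> R) : Prop :=
  (forall eps, 0 < eps -> exists d, 0 < d /\ forall x y,
      Rabs x < d -> Rabs y < d -> Rabs (tt x y) < eps) /\
  (exists d, 0 < d /\ forall x y, Rabs x < d -> Rabs y < d ->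
      y = x / (Derive z (tt x y)) ^ 2 + tt x y).

Definition f_of (z : R -> R) (tt : R -> R -> R) (x y : R) : R :=
  2 * x / Derive z (tt x y) + z (tt x y).

(* Main.v *)
Require Import Defs.
From Stdlib Require Import Reals Lra Lia Psatz.
From Coquelicot Require Import Coquelicot.
Open Scope R_scope.

Lemma sum_switch (a : nat -> nat -> R) n m :
  sum_f_R0 (fun i => sum_f_R0 (fun j => a i j) m) n =
  sum_f_R0 (fun j => sum_f_R0 (fun i => a i j) n) m.
Proof.
  induction n; simpl. reflexivity.
  rewrite IHn. rewrite <- sum_plus. reflexivity.
Qed.

Lemma sum_mult_r (F : nat -> R) c N :
  sum_f_R0 F N * c = sum_f_R0 (fun k => F k * c) N.
Proof. rewrite Rmult_comm, scal_sum. reflexivity. Qed.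

Lemma sum_mult_l (F : nat -> R) c N :
  c * sum_f_R0 F N = sum_f_R0 (fun k => c * F k) N.
Proof. rewrite scal_sum. apply sum_eq; intros; ring. Qed.

Lemma sum_zero (F : nat -> R) N : (forall i, (i <= N)%nat -> F i = 0) ->
  sum_f_R0 F N = 0.
Proof.
  intros H. rewrite (sum_eq F (fun _ => 0)); auto.
  rewrite sum_cte; ring.
Qed.

Lemma sum_delta (g : nat -> R) k n : (k <= n)%nat ->
  sum_f_R0 (fun i => if Nat.eqb k i then g i else 0) n = g k.
Proof.
  induction n; intros Hk.
  - simpl. assert (k = 0%nat) by lia. subst. reflexivity.
  - simpl. destruct (Nat.eq_dec k (S n)).
    + subst. rewrite Nat.eqb_refl. rewrite sum_zero. ring.
      intros i Hi. destruct (Nat.eqb_spec (S n) i); [lia|reflexivity].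
    + rewrite IHn by lia. destruct (Nat.eqb_spec k (S n)); [lia|ring].
Qed.

Lemma sum_abs_le (F G : nat -> R) N : (forall i, (i <= N)%nat -> Rabs (F i) <= G i) ->
  Rabs (sum_f_R0 F N) <= sum_f_R0 G N.
Proof.
  intros H. eapply Rle_trans. apply Rsum_abs. apply sum_Rle. auto.
Qed.

Lemma sum_nonneg (F : nat -> R) N : (forall i, (i <= N)%nat -> 0 <= F i) ->
  0 <= sum_f_R0 F N.
Proof.
  intros H. rewrite <- (sum_zero (fun _ => 0) N) by auto. apply sum_Rle. auto.
Qed.

(* graded arrays: a n i = coefficient of x^i y^(n-i) *)
Definition arr := nat -> nat -> R.
Definition Hp (a : arr) x y n := sum_f_R0 (fun i => a n i * x ^ i * y ^ (n - i)) n.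
Definition mul (a b : arr) : arr := fun n i =>
  sum_f_R0 (fun k => sum_f_R0 (fun j => sum_f_R0 (fun l =>
     if Nat.eqb (j + l) i then a k j * b (n - k)%nat l else 0) (n - k)) k) n.

Lemma Hp_mul a b x y n :
  Hp (mul a b) x y n = sum_f_R0 (fun k => Hp a x y k * Hp b x y (n - k)) n.
Proof.
  unfold Hp, mul.
  transitivity (sum_f_R0 (fun i => sum_f_R0 (fun k => sum_f_R0 (fun j => sum_f_R0 (fun l =>
     if Nat.eqb (j + l) i then a k j * b (n - k)%nat l * (x ^ i * y ^ (n - i)) else 0) (n - k)) k) n) n).
  { apply sum_eq; intros i Hi. rewrite Rmult_assoc, sum_mult_r.
    apply sum_eq; intros k Hk. rewrite sum_mult_r.
    apply sum_eq; intros j Hj. rewrite sum_mult_r.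
    apply sum_eq; intros l Hl. destruct (Nat.eqb (j+l) i); ring. }
  rewrite sum_switch.
  apply sum_eq; intros k Hk. rewrite sum_switch.
  rewrite sum_mult_r.
  apply sum_eq; intros j Hj. rewrite sum_switch.
  rewrite sum_mult_l.
  apply sum_eq; intros l Hl.
  rewrite (sum_delta (fun i => a k j * b (n - k)%nat l * (x ^ i * y ^ (n - i)))) by lia.
  rewrite pow_add.
  replace (n - (j + l))%nat with ((k - j) + (n - k - l))%nat by lia.
  rewrite pow_add. ring.
Qed.

Lemma is_series_plusR (a b : nat -> R) la lb : is_series a la -> is_series b lb ->
  is_series (fun n => a n + b n) (la + lb).
Proof. intros H1 H2. exact (is_series_plus (K:=R_AbsRing) (V:=R_NormedModule) a b la lb H1 H2). Qed.
Lemma is_series_minusR (a b : nat -> R) la lb : is_series a la -> is_series b lb ->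
  is_series (fun n => a n - b n) (la - lb).
Proof. intros H1 H2. exact (is_series_minus (K:=R_AbsRing) (V:=R_NormedModule) a b la lb H1 H2). Qed.
Lemma is_series_scalR (c : R) (a : nat -> R) la : is_series a la ->
  is_series (fun n => c * a n) (c * la).
Proof. intros H1. exact (is_series_scal_l (K:=R_AbsRing) (V:=R_NormedModule) c a la H1). Qed.
Lemma ex_series_Rle (a b : nat -> R) : (forall n, Rabs (a n) <= b n) -> ex_series b -> ex_series a.
Proof. intros H1 H2. apply (ex_series_le (K:=R_AbsRing) (V:=R_CompleteNormedModule) a b); auto. Qed.
Lemma ex_series_abs_le (a b : nat -> R) : (forall n, Rabs (a n) <= b n) -> ex_series b ->
  ex_series (fun n => Rabs (a n)).
Proof. intros H1 H2. apply (ex_series_Rle _ b); auto. intro n; rewrite Rabs_Rabsolu; auto. Qed.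

Lemma sum_trunc (f : nat -> R) n N : (n <= N)%nat -> (forall i, (n < i <= N)%nat -> f i = 0) ->
  sum_f_R0 f N = sum_f_R0 f n.
Proof.
  induction N; intros Hn Hz.
  - assert (n = 0%nat) by lia. subst; reflexivity.
  - destruct (Nat.eq_dec n (S N)). subst; reflexivity.
    simpl. rewrite IHN by (try lia; intros; apply Hz; lia). rewrite (Hz (S N)) by lia. ring.
Qed.

Lemma sum_mono_N (f : nat -> R) n N : (n <= N)%nat -> (forall i, 0 <= f i) ->
  sum_f_R0 f n <= sum_f_R0 f N.
Proof.
  induction N; intros Hn Hp.
  - assert (n = 0%nat) by lia. subst; lra.
  - destruct (Nat.eq_dec n (S N)). subst; lra.
    simpl. specialize (IHN ltac:(lia) Hp). specialize (Hp (S N)). lra.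
Qed.

Lemma tri_rect (e : nat -> nat -> R) N : (forall m n, (n < m)%nat -> e m n = 0) ->
  sum_f_R0 (fun n => sum_f_R0 (fun m => e m n) n) N =
  sum_f_R0 (fun m => sum_f_R0 (fun n => e m n) N) N.
Proof.
  intros Hz. rewrite <- (sum_switch (fun n m => e m n)). apply sum_eq; intros n Hn.
  symmetry. apply sum_trunc; auto. intros i Hi; apply Hz; lia.
Qed.

Lemma partial_le_lim (a : nat -> R) l N : (forall n, 0 <= a n) -> is_series a l ->
  sum_f_R0 a N <= l.
Proof.
  intros Hp Hl. apply is_series_Reals in Hl.
  apply (growing_ineq (fun N => sum_f_R0 a N)); auto.
  intro n. simpl. specialize (Hp (S n)). lra.
Qed.

Lemma cv_finite_sum (u : nat -> nat -> R) (l : nat -> R) M :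
  (forall m, Un_cv (u m) (l m)) ->
  Un_cv (fun N => sum_f_R0 (fun m => u m N) M) (sum_f_R0 l M).
Proof.
  intros H. induction M; simpl. apply H.
  apply CV_plus; auto.
Qed.

Lemma FUB_nonneg (e : nat -> nat -> R) (V : nat -> R) W :
  (forall m n, 0 <= e m n) -> (forall m n, (n < m)%nat -> e m n = 0) ->
  (forall m, is_series (e m) (V m)) -> is_series V W ->
  is_series (fun n => sum_f_R0 (fun m => e m n) n) W.
Proof.
  intros Hpos Hz HV HW.
  assert (Vpos : forall m, 0 <= V m).
  { intro m. eapply Rle_trans; [|apply (partial_le_lim (e m) _ 0); auto]. simpl. auto. }
  assert (HW' := HW). apply is_series_Reals in HW'.
  assert (HV' : forall m, Un_cv (fun N => sum_f_R0 (e m) N) (V m)).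
  { intro m. apply is_series_Reals. auto. }
  apply is_series_Reals. intros eps Heps.
  destruct (HW' (eps/2)) as [M HM]; [lra|].
  assert (Hfin := cv_finite_sum (fun m N => sum_f_R0 (e m) N) V M HV').
  destruct (Hfin (eps/2)) as [N0 HN0]; [lra|].
  exists (max N0 M). intros N HN.
  rewrite tri_rect by auto.
  specialize (HM M ltac:(lia)). specialize (HN0 N ltac:(lia)).
  unfold Rdist in *.
  assert (U1 : sum_f_R0 (fun m => sum_f_R0 (fun n => e m n) N) N <= sum_f_R0 V N).
  { apply sum_Rle; intros m _. apply partial_le_lim; auto. }
  assert (U2 : sum_f_R0 V N <= W) by (apply partial_le_lim; auto).
  assert (L1 : sum_f_R0 (fun m => sum_f_R0 (fun n => e m n) N) M <=
               sum_f_R0 (fun m => sum_f_R0 (fun n => e m n) N) N).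
  { apply sum_mono_N. lia. intro i. apply sum_nonneg. auto. }
  assert (L2 : sum_f_R0 V M <= W) by (apply partial_le_lim; auto).
  simpl in HN0.
  apply Rabs_def2 in HM. apply Rabs_def2 in HN0. destruct HM, HN0.
  change (fun m => sum_f_R0 (e m) N) with (fun m => sum_f_R0 (fun n => e m n) N) in *.
  apply Rabs_def1; lra.
Qed.

Lemma FUB (e E : nat -> nat -> R) (v V : nat -> R) W :
  (forall m n, Rabs (e m n) <= E m n) ->
  (forall m n, (n < m)%nat -> e m n = 0) -> (forall m n, (n < m)%nat -> E m n = 0) ->
  (forall m, is_series (e m) (v m)) ->
  (forall m, is_series (E m) (V m)) -> is_series V W ->
  ex_series v /\ is_series (fun n => sum_f_R0 (fun m => e m n) n) (Series v).
Proof.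
  intros Hle Hz HZ Hv HV HW.
  assert (Epos : forall m n, 0 <= E m n) by (intros; eapply Rle_trans; [apply Rabs_pos|apply Hle]).
  assert (Hvle : forall m, Rabs (v m) <= V m).
  { intro m. rewrite <- (is_series_unique _ _ (Hv m)), <- (is_series_unique _ _ (HV m)).
    eapply Rle_trans. apply Series_Rabs. apply ex_series_abs_le with (E m); auto. eexists; eauto.
    apply Series_le. intro n; split; [apply Rabs_pos|auto]. eexists; eauto. }
  assert (Hexv : ex_series v) by (apply ex_series_Rle with V; auto; eexists; eauto).
  split; auto.
  assert (H1 : is_series (fun n => sum_f_R0 (fun m => E m n + e m n) n) (W + Series v)).
  { apply FUB_nonneg with (V := fun m => V m + v m).
    - intros m n. specialize (Hle m n). revert Hle. unfold Rabs; destruct Rcase_abs; intros; lra.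
    - intros m n Hmn. rewrite Hz, HZ; auto. ring.
    - intro m. apply is_series_plusR; auto.
    - apply is_series_plusR; auto. apply Series_correct; auto. }
  assert (H2 : is_series (fun n => sum_f_R0 (fun m => E m n) n) W).
  { apply FUB_nonneg with V; auto. }
  assert (H3 := is_series_minusR _ _ _ _ H1 H2).
  replace (Series v) with (W + Series v - W) by ring.
  eapply is_series_ext; [|exact H3]. intro n. simpl.
  rewrite sum_plus. ring.
Qed.

Definition maj (a A : arr) := forall n i, (i <= n)%nat -> Rabs (a n i) <= A n i.
Definition absA (a : arr) : arr := fun n i => Rabs (a n i).
Definition ev (a : arr) x y := Series (Hp a x y).

Lemma maj_nonneg a A : maj a A -> forall n i, (i <= n)%nat -> 0 <= A n i.
Proof. intros H n i Hi. eapply Rle_trans; [apply Rabs_pos|apply H; auto]. Qed.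

Lemma maj_absA a : maj a (absA a).
Proof. intros n i _. unfold absA. lra. Qed.

Lemma maj_self A : (forall n i, (i <= n)%nat -> 0 <= A n i) -> maj A A.
Proof. intros H n i Hi. rewrite Rabs_right; [lra|]. apply Rle_ge; auto. Qed.

Lemma maj_absA_self a : maj (absA a) (absA a).
Proof. apply maj_self. intros; apply Rabs_pos. Qed.

Lemma Hp_le a A x y r n : 0 <= r -> Rabs x <= r -> Rabs y <= r -> maj a A ->
  Rabs (Hp a x y n) <= Hp A r r n.
Proof.
  intros Hr Hx Hy Ha. unfold Hp. apply sum_abs_le. intros i Hi.
  rewrite !Rabs_mult, <- !RPow_abs.
  assert (0 <= Rabs x ^ i) by (apply pow_le, Rabs_pos).
  assert (0 <= Rabs y ^ (n - i)) by (apply pow_le, Rabs_pos).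
  assert (Rabs x ^ i <= r ^ i) by (apply pow_incr; split; [apply Rabs_pos|auto]).
  assert (Rabs y ^ (n - i) <= r ^ (n - i)) by (apply pow_incr; split; [apply Rabs_pos|auto]).
  assert (Rabs (a n i) <= A n i) by auto.
  assert (0 <= Rabs (a n i)) by apply Rabs_pos.
  apply Rmult_le_compat; try apply Rmult_le_pos; auto.
  apply Rmult_le_compat; auto.
Qed.

Lemma Hp_nonneg A r n : 0 <= r -> (forall n i, (i <= n)%nat -> 0 <= A n i) -> 0 <= Hp A r r n.
Proof.
  intros Hr HA. unfold Hp. apply sum_nonneg. intros i Hi.
  apply Rmult_le_pos; [apply Rmult_le_pos|]; auto; apply pow_le; auto.
Qed.

Lemma ev_ok a A x y r : 0 <= r -> Rabs x <= r -> Rabs y <= r -> maj a A ->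
  ex_series (Hp A r r) ->
  ex_series (fun n => Rabs (Hp a x y n)) /\ ex_series (Hp a x y) /\
  Rabs (ev a x y) <= Series (Hp A r r).
Proof.
  intros Hr Hx Hy Ha HA.
  assert (H1 : ex_series (fun n => Rabs (Hp a x y n))).
  { apply ex_series_abs_le with (Hp A r r); auto. intro n; apply Hp_le; auto. }
  split; auto. split. apply ex_series_Rabs; auto.
  unfold ev. eapply Rle_trans. apply Series_Rabs; auto.
  apply Series_le; auto. intro n; split. apply Rabs_pos. apply Hp_le; auto.
Qed.

Lemma absA_bound a A r : 0 <= r -> maj a A -> ex_series (Hp A r r) ->
  ex_series (Hp (absA a) r r) /\ Series (Hp (absA a) r r) <= Series (Hp A r r).
Proof.
  intros Hr Ha HA.
  assert (Hm : maj (absA a) A) by (intros n i Hi; unfold absA; rewrite Rabs_Rabsolu; auto).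
  assert (Hle : forall n, Rabs (Hp (absA a) r r n) <= Hp A r r n)
    by (intro; apply Hp_le; auto; rewrite Rabs_right; lra).
  assert (Hpos : forall n, 0 <= Hp (absA a) r r n)
    by (intro; apply Hp_nonneg; auto; intros; apply Rabs_pos).
  split. apply ex_series_Rle with (Hp A r r); auto.
  apply Series_le; auto. intro n; split; auto. specialize (Hle n).
  rewrite Rabs_right in Hle; auto. apply Rle_ge; auto.
Qed.

Lemma maj_mul a b A B : maj a A -> maj b B -> maj (mul a b) (mul A B).
Proof.
  intros Ha Hb n i Hi. unfold mul.
  apply sum_abs_le; intros k Hk. apply sum_abs_le; intros j Hj. apply sum_abs_le; intros l Hl.
  destruct (Nat.eqb (j + l) i).
  - rewrite Rabs_mult. apply Rmult_le_compat; try apply Rabs_pos. apply Ha; lia. apply Hb; lia.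
  - rewrite Rabs_R0; lra.
Qed.

Lemma mul_series a b A B x y r : 0 <= r -> Rabs x <= r -> Rabs y <= r -> maj a A -> maj b B ->
  ex_series (Hp A r r) -> ex_series (Hp B r r) ->
  is_series (Hp (mul a b) x y) (ev a x y * ev b x y).
Proof.
  intros Hr Hx Hy Ha Hb HA HB.
  destruct (ev_ok a A x y r) as [Ha1 [Ha2 _]]; auto.
  destruct (ev_ok b B x y r) as [Hb1 [Hb2 _]]; auto.
  eapply is_series_ext. intro n. symmetry. apply Hp_mul.
  apply is_series_mult; auto; apply Series_correct; auto.
Qed.

Lemma nonneg_mul A B : (forall n i, (i <= n)%nat -> 0 <= A n i) ->
  (forall n i, (i <= n)%nat -> 0 <= B n i) -> (forall n i, (i <= n)%nat -> 0 <= mul A B n i).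
Proof.
  intros HA HB n i Hi. unfold mul. apply sum_nonneg; intros k Hk. apply sum_nonneg; intros j Hj.
  apply sum_nonneg; intros l Hl. destruct (Nat.eqb (j+l) i); [|lra].
  apply Rmult_le_pos. apply HA; lia. apply HB; lia.
Qed.

Definition one : arr := fun n i => if Nat.eqb n 0 then 1 else 0.
Fixpoint pw (u : arr) (m : nat) : arr :=
  match m with O => one | S m' => mul u (pw u m') end.
Definition comp (g : nat -> R) (u : arr) : arr := fun n i =>
  sum_f_R0 (fun m => g m * pw u m n i) n.

Lemma is_series_single (a : nat -> R) k : (forall n, n <> k -> a n = 0) -> is_series a (a k).
Proof.
  intros Hz. apply is_series_Reals. intros eps Heps. exists k. intros n Hn.
  rewrite (sum_trunc a k n) by (auto; intros; apply Hz; lia).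
  destruct k. simpl. unfold Rdist. rewrite Rminus_diag, Rabs_R0; lra.
  simpl. rewrite sum_zero by (intros; apply Hz; lia). unfold Rdist.
  replace (0 + a (S k) - a (S k)) with 0 by ring. rewrite Rabs_R0; lra.
Qed.

Lemma Hp_one x y n : Hp one x y n = if Nat.eqb n 0 then 1 else 0.
Proof.
  unfold Hp, one. destruct n. simpl; ring.
  apply sum_zero. intros; simpl; ring.
Qed.

Lemma one_series x y : is_series (Hp one x y) 1.
Proof.
  replace 1 with (Hp one x y 0) by (rewrite Hp_one; reflexivity).
  apply is_series_single. intros n Hn. rewrite Hp_one. destruct n; [lia|reflexivity].
Qed.

Lemma nonneg_one : forall n i, (i <= n)%nat -> 0 <= one n i.
Proof. intros n i _. unfold one. destruct (Nat.eqb n 0); lra. Qed.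

Lemma maj_one : maj one one.
Proof. apply maj_self, nonneg_one. Qed.

Lemma nonneg_pw U m : (forall n i, (i <= n)%nat -> 0 <= U n i) ->
  forall n i, (i <= n)%nat -> 0 <= pw U m n i.
Proof. intros HU. induction m; simpl. apply nonneg_one. apply nonneg_mul; auto. Qed.

Lemma maj_pw u U m : maj u U -> maj (pw u m) (pw U m).
Proof. intros Hu. induction m; simpl. apply maj_one. apply maj_mul; auto. Qed.

Lemma pw_series u U x y r m : 0 <= r -> Rabs x <= r -> Rabs y <= r -> maj u U ->
  ex_series (Hp U r r) ->
  is_series (Hp (pw u m) x y) (ev u x y ^ m) /\
  is_series (Hp (pw U m) r r) (Series (Hp U r r) ^ m).
Proof.
  intros Hr Hx Hy Hu HU.
  assert (HUU : maj U U) by (apply maj_self; apply (maj_nonneg u); auto).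
  assert (Hrr : Rabs r <= r) by (rewrite Rabs_right; lra).
  induction m; simpl.
  - split; apply one_series.
  - destruct IHm as [IH1 IH2].
    assert (Hm : maj (pw u m) (pw U m)) by (apply maj_pw; auto).
    assert (HmU : maj (pw U m) (pw U m)) by (apply maj_pw; auto).
    split.
    + replace (ev u x y ^ m) with (ev (pw u m) x y) by (unfold ev; apply is_series_unique; auto).
      apply mul_series with U (pw U m) r; auto. eexists; eauto.
    + replace (Series (Hp U r r) ^ m) with (ev (pw U m) r r) by (unfold ev; apply is_series_unique; auto).
      apply mul_series with U (pw U m) r; auto. eexists; eauto.
Qed.

Lemma pw_low u m : u 0%nat 0%nat = 0 -> forall n i, (n < m)%nat -> pw u m n i = 0.
Proof.
  intros Hu. induction m; intros n i Hn. lia.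
  simpl. unfold mul. apply sum_zero; intros k Hk. apply sum_zero; intros j Hj.
  apply sum_zero; intros l Hl. destruct (Nat.eqb (j + l) i); [|reflexivity].
  destruct k. assert (j = 0%nat) by lia. subst. rewrite Hu. ring.
  rewrite IHm by lia. ring.
Qed.

Lemma Hp_low u m x y n : u 0%nat 0%nat = 0 -> (n < m)%nat -> Hp (pw u m) x y n = 0.
Proof.
  intros Hu Hn. unfold Hp. apply sum_zero. intros i Hi. rewrite pw_low; auto. ring.
Qed.

Lemma maj_comp g u U : maj u U -> maj (comp g u) (comp (fun m => Rabs (g m)) U).
Proof.
  intros Hu n i Hi. unfold comp. apply sum_abs_le. intros m Hm.
  rewrite Rabs_mult. apply Rmult_le_compat_l. apply Rabs_pos. apply maj_pw; auto.
Qed.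

Lemma nonneg_comp g U : (forall m, 0 <= g m) -> (forall n i, (i <= n)%nat -> 0 <= U n i) ->
  forall n i, (i <= n)%nat -> 0 <= comp g U n i.
Proof.
  intros Hg HU n i Hi. unfold comp. apply sum_nonneg. intros m Hm.
  apply Rmult_le_pos; auto. apply nonneg_pw; auto.
Qed.

Lemma Hp_comp g u x y n :
  Hp (comp g u) x y n = sum_f_R0 (fun m => g m * Hp (pw u m) x y n) n.
Proof.
  unfold Hp, comp.
  transitivity (sum_f_R0 (fun i => sum_f_R0 (fun m => g m * (pw u m n i * x ^ i * y ^ (n - i))) n) n).
  { apply sum_eq; intros i Hi. rewrite Rmult_assoc, sum_mult_r. apply sum_eq; intros; ring. }
  rewrite sum_switch. apply sum_eq; intros m Hm. rewrite sum_mult_l. reflexivity.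
Qed.

Lemma comp_series g u U x y r : 0 <= r -> Rabs x <= r -> Rabs y <= r -> maj u U ->
  ex_series (Hp U r r) -> u 0%nat 0%nat = 0 -> U 0%nat 0%nat = 0 ->
  ex_series (fun m => Rabs (g m) * Series (Hp U r r) ^ m) ->
  ex_series (fun m => g m * ev u x y ^ m) /\
  is_series (Hp (comp g u) x y) (Series (fun m => g m * ev u x y ^ m)).
Proof.
  intros Hr Hx Hy Hu HU Hu0 HU0 Hg.
  destruct (FUB (fun m n => g m * Hp (pw u m) x y n) (fun m n => Rabs (g m) * Hp (pw U m) r r n)
     (fun m => g m * ev u x y ^ m) (fun m => Rabs (g m) * Series (Hp U r r) ^ m)
     (Series (fun m => Rabs (g m) * Series (Hp U r r) ^ m))) as [H1 H2].
  - intros m n. rewrite Rabs_mult. apply Rmult_le_compat_l. apply Rabs_pos.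
    apply Hp_le; auto. apply maj_pw; auto.
  - intros m n Hmn. rewrite Hp_low; auto. ring.
  - intros m n Hmn. rewrite Hp_low; auto. ring.
  - intro m. apply is_series_scalR. apply (pw_series u U x y r m); auto.
  - intro m. apply is_series_scalR. apply (pw_series u U x y r m); auto.
  - apply Series_correct; auto.
  - split; auto. eapply is_series_ext; [|exact H2]. intro n. simpl. rewrite Hp_comp. reflexivity.
Qed.

Definition add (a b : arr) : arr := fun n i => a n i + b n i.
Definition scl (c : R) (a : arr) : arr := fun n i => c * a n i.
Definition Xa : arr := fun n i => if (Nat.eqb n 1 && Nat.eqb i 1)%bool then 1 else 0.
Definition Ya : arr := fun n i => if (Nat.eqb n 1 && Nat.eqb i 0)%bool then 1 else 0.

Lemma Hp_add a b x y n : Hp (add a b) x y n = Hp a x y n + Hp b x y n.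
Proof. unfold Hp, add. rewrite <- sum_plus. apply sum_eq; intros; ring. Qed.
Lemma Hp_scl c a x y n : Hp (scl c a) x y n = c * Hp a x y n.
Proof. unfold Hp, scl. rewrite sum_mult_l. apply sum_eq; intros; ring. Qed.

Lemma maj_add a b A B : maj a A -> maj b B -> maj (add a b) (add A B).
Proof. intros Ha Hb n i Hi. unfold add. eapply Rle_trans. apply Rabs_triang.
  specialize (Ha n i Hi); specialize (Hb n i Hi). lra. Qed.
Lemma maj_scl c a A : maj a A -> maj (scl c a) (scl (Rabs c) A).
Proof. intros Ha n i Hi. unfold scl. rewrite Rabs_mult. apply Rmult_le_compat_l. apply Rabs_pos. auto. Qed.

Lemma add_series a b A B x y r : 0 <= r -> Rabs x <= r -> Rabs y <= r -> maj a A -> maj b B ->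
  ex_series (Hp A r r) -> ex_series (Hp B r r) ->
  is_series (Hp (add a b) x y) (ev a x y + ev b x y).
Proof.
  intros Hr Hx Hy Ha Hb HA HB.
  destruct (ev_ok a A x y r) as [_ [Ha2 _]]; auto.
  destruct (ev_ok b B x y r) as [_ [Hb2 _]]; auto.
  eapply is_series_ext. intro n. symmetry. apply Hp_add.
  apply is_series_plusR; apply Series_correct; auto.
Qed.

Lemma scl_series c a A x y r : 0 <= r -> Rabs x <= r -> Rabs y <= r -> maj a A ->
  ex_series (Hp A r r) -> is_series (Hp (scl c a) x y) (c * ev a x y).
Proof.
  intros Hr Hx Hy Ha HA.
  destruct (ev_ok a A x y r) as [_ [Ha2 _]]; auto.
  eapply is_series_ext. intro n. symmetry. apply Hp_scl.
  apply is_series_scalR; apply Series_correct; auto.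
Qed.

Lemma Hp_X x y n : Hp Xa x y n = if Nat.eqb n 1 then x else 0.
Proof.
  unfold Hp, Xa. destruct n as [|[|n]]. simpl; ring. simpl; ring.
  apply sum_zero; intros; simpl; ring.
Qed.
Lemma Hp_Y x y n : Hp Ya x y n = if Nat.eqb n 1 then y else 0.
Proof.
  unfold Hp, Ya. destruct n as [|[|n]]. simpl; ring. simpl; ring.
  apply sum_zero; intros; simpl; ring.
Qed.
Lemma X_series x y : is_series (Hp Xa x y) x.
Proof.
  replace x with (Hp Xa x y 1) at 2 by (rewrite Hp_X; reflexivity).
  apply is_series_single. intros n Hn. rewrite Hp_X. destruct (Nat.eqb_spec n 1); [lia|reflexivity].
Qed.
Lemma Y_series x y : is_series (Hp Ya x y) y.
Proof.
  replace y with (Hp Ya x y 1) at 2 by (rewrite Hp_Y; reflexivity).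
  apply is_series_single. intros n Hn. rewrite Hp_Y. destruct (Nat.eqb_spec n 1); [lia|reflexivity].
Qed.
Lemma nonneg_X : forall n i, (i <= n)%nat -> 0 <= Xa n i.
Proof. intros n i _. unfold Xa. destruct (_ && _)%bool; lra. Qed.
Lemma nonneg_Y : forall n i, (i <= n)%nat -> 0 <= Ya n i.
Proof. intros n i _. unfold Ya. destruct (_ && _)%bool; lra. Qed.

Lemma bounded_series (a : nat -> R) B : (forall n, 0 <= a n) -> (forall N, sum_f_R0 a N <= B) ->
  ex_series a /\ Series a <= B.
Proof.
  intros Hp HB.
  assert (Hg : Un_growing (fun N => sum_f_R0 a N)) by (intro n; simpl; specialize (Hp (S n)); lra).
  destruct (growing_cv (fun N => sum_f_R0 a N) Hg) as [l Hl].
  { exists B. intros x [i ->]. auto. }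
  assert (Hs : is_series a l) by (apply is_series_Reals; exact Hl).
  split. eexists; eauto.
  rewrite (is_series_unique _ _ Hs).
  eapply Rle_cv_lim; [exact HB | exact Hl | ].
  intros eps Heps. exists 0%nat. intros; unfold Rdist. rewrite Rminus_diag, Rabs_R0; lra.
Qed.

Definition nonneg (A : arr) := forall n i, (i <= n)%nat -> 0 <= A n i.
Definition NS r (A : arr) s := nonneg A /\ is_series (Hp A r r) s.

Section NSsec.
Variable r : R.
Hypothesis Hr : 0 <= r.
Let Hrr : Rabs r <= r. Proof. rewrite Rabs_right; lra. Qed.

Lemma NS_add A B s t : NS r A s -> NS r B t -> NS r (add A B) (s + t).
Proof.
  intros [HA HAs] [HB HBs]. split.
  intros n i Hi. unfold add. specialize (HA n i Hi); specialize (HB n i Hi); lra.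
  replace s with (ev A r r) by (apply is_series_unique; auto).
  replace t with (ev B r r) by (apply is_series_unique; auto).
  apply add_series with A B r; auto; try apply maj_self; auto; eexists; eauto.
Qed.

Lemma NS_scl c A s : 0 <= c -> NS r A s -> NS r (scl c A) (c * s).
Proof.
  intros Hc [HA HAs]. split.
  intros n i Hi. unfold scl. apply Rmult_le_pos; auto.
  replace s with (ev A r r) by (apply is_series_unique; auto).
  apply scl_series with A r; auto; try apply maj_self; auto; eexists; eauto.
Qed.

Lemma NS_mul A B s t : NS r A s -> NS r B t -> NS r (mul A B) (s * t).
Proof.
  intros [HA HAs] [HB HBs]. split. intros n i Hi; apply nonneg_mul; auto.
  replace s with (ev A r r) by (apply is_series_unique; auto).
  replace t with (ev B r r) by (apply is_series_unique; auto).
  apply mul_series with A B r; auto; try apply maj_self; auto; eexists; eauto.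
Qed.

Lemma NS_comp g U s : NS r U s -> U 0%nat 0%nat = 0 -> (forall m, 0 <= g m) ->
  ex_series (fun m => g m * s ^ m) -> NS r (comp g U) (Series (fun m => g m * s ^ m)).
Proof.
  intros [HU HUs] HU0 Hg Hex. split. intros n i Hi; apply nonneg_comp; auto.
  replace s with (ev U r r) by (apply is_series_unique; auto).
  apply (comp_series g U U r r r); auto; try apply maj_self; auto. eexists; eauto.
  replace (Series (Hp U r r)) with s by (symmetry; apply is_series_unique; auto).
  eapply ex_series_ext; [|exact Hex]. intro m. simpl. rewrite Rabs_right; auto. apply Rle_ge; auto.
Qed.

Lemma NS_X : NS r Xa r.
Proof. split. exact nonneg_X. apply X_series. Qed.
Lemma NS_Y : NS r Ya r.
Proof. split. exact nonneg_Y. apply Y_series. Qed.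

Lemma NS_nonneg_val A s : NS r A s -> 0 <= s.
Proof.
  intros [HA HAs]. eapply Rle_trans; [|apply (partial_le_lim (Hp A r r) s 0); auto].
  simpl. apply Hp_nonneg; auto. intro n; apply Hp_nonneg; auto.
Qed.

Lemma NS_absA A : nonneg A -> NS r (absA A) (Series (Hp A r r)) \/ True.
Proof. auto. Qed.

Definition Nn (a : arr) := Series (Hp (absA a) r r).

Lemma NS_bound a A s : maj a A -> NS r A s -> ex_series (Hp (absA a) r r) /\ Nn a <= s.
Proof.
  intros Ha [HA HAs]. destruct (absA_bound a A r) as [H1 H2]; auto. eexists; eauto.
  split; auto. unfold Nn. rewrite <- (is_series_unique _ _ HAs). auto.
Qed.

Lemma NS_absA_self a : ex_series (Hp (absA a) r r) -> NS r (absA a) (Nn a).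
Proof. intros H. split. intros n i _; apply Rabs_pos. apply Series_correct; auto. Qed.
End NSsec.

Definition agree_lt d (a b : arr) := forall n i, (n < d)%nat -> a n i = b n i.

Lemma agree_mul d a a' b b' : agree_lt d a a' -> agree_lt d b b' -> agree_lt d (mul a b) (mul a' b').
Proof.
  intros Ha Hb n i Hn. unfold mul.
  apply sum_eq; intros k Hk. apply sum_eq; intros j Hj. apply sum_eq; intros l Hl.
  rewrite Ha, Hb by lia. reflexivity.
Qed.

Lemma agree_pw d u u' m : agree_lt d u u' -> agree_lt d (pw u m) (pw u' m).
Proof.
  intros Hu. induction m; simpl. intros n i _; reflexivity. apply agree_mul; auto.
Qed.

Lemma agree_comp d g u u' : agree_lt d u u' -> agree_lt d (comp g u) (comp g u').
Proof.
  intros Hu n i Hn. unfold comp. apply sum_eq; intros m Hm. rewrite (agree_pw d u u' m); auto.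
Qed.

Lemma agree_add d a a' b b' : agree_lt d a a' -> agree_lt d b b' -> agree_lt d (add a b) (add a' b').
Proof. intros Ha Hb n i Hn. unfold add. rewrite Ha, Hb; auto. Qed.
Lemma agree_scl d c a a' : agree_lt d a a' -> agree_lt d (scl c a) (scl c a').
Proof. intros Ha n i Hn. unfold scl. rewrite Ha; auto. Qed.
Lemma agree_refl d a : agree_lt d a a.
Proof. intros n i _; reflexivity. Qed.

Lemma agree_mul_strict d a a' b b' :
  a 0%nat 0%nat = 0 -> a' 0%nat 0%nat = 0 -> b 0%nat 0%nat = 0 -> b' 0%nat 0%nat = 0 ->
  agree_lt d a a' -> agree_lt d b b' -> agree_lt (S d) (mul a b) (mul a' b').
Proof.
  intros Ha0 Ha0' Hb0 Hb0' Ha Hb n i Hn. unfold mul.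
  apply sum_eq; intros k Hk. apply sum_eq; intros j Hj. apply sum_eq; intros l Hl.
  destruct (Nat.eqb (j + l) i); [|reflexivity].
  destruct (Nat.eq_dec k 0). subst. assert (j = 0%nat) by lia. subst. rewrite Ha0, Ha0'. ring.
  destruct (Nat.eq_dec k n). subst. assert (l = 0%nat) by lia. subst.
  replace (n - n)%nat with 0%nat by lia. rewrite Hb0, Hb0'. ring.
  rewrite Ha, Hb by lia. reflexivity.
Qed.

Lemma mul00 a b : mul a b 0%nat 0%nat = a 0%nat 0%nat * b 0%nat 0%nat.
Proof. unfold mul. simpl. ring. Qed.
Lemma comp00 g u : comp g u 0%nat 0%nat = g 0%nat.
Proof. unfold comp. simpl. unfold one. simpl. ring. Qed.

Definition sub (a b : arr) : arr := add a (scl (-1) b).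
Definition Vof (a : arr) : arr := sub Ya a.
Definition Qof q (a : arr) : arr := comp q (Vof a).
Definition Q2 q (a : arr) : arr := add (scl 2 (Qof q a)) (mul (Qof q a) (Qof q a)).
Definition T q (a : arr) : arr := sub Xa (mul a (Q2 q a)).

Lemma Q2_00 q a : q 0%nat = 0 -> Q2 q a 0%nat 0%nat = 0.
Proof. intros Hq. unfold Q2, add, scl. rewrite mul00. unfold Qof. rewrite comp00, Hq. ring. Qed.

Lemma T00 q a : q 0%nat = 0 -> a 0%nat 0%nat = 0 -> T q a 0%nat 0%nat = 0.
Proof. intros Hq Ha. unfold T, sub, add, scl. rewrite mul00, Ha. unfold Xa. simpl. ring. Qed.

Lemma T_agree q d a a' : q 0%nat = 0 -> a 0%nat 0%nat = 0 -> a' 0%nat 0%nat = 0 ->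
  agree_lt d a a' -> agree_lt (S d) (T q a) (T q a').
Proof.
  intros Hq Ha0 Ha0' Ha. unfold T, sub.
  apply agree_add. apply agree_refl. apply agree_scl.
  apply agree_mul_strict; auto; try apply Q2_00; auto.
  unfold Q2, Qof, Vof, sub. apply agree_add. apply agree_scl. apply agree_comp.
  apply agree_add. apply agree_refl. apply agree_scl. auto.
  apply agree_mul; apply agree_comp; apply agree_add; try apply agree_refl; apply agree_scl; auto.
Qed.

Definition zeroA : arr := fun _ _ => 0.
Definition it q k := Nat.iter k (T q) zeroA.
Definition Sstar q : arr := fun n i => it q (S n) n i.

Section Fix.
Variable q : nat -> R.
Hypothesis Hq : q 0%nat = 0.

Lemma it00 k : it q k 0%nat 0%nat = 0.
Proof. induction k; simpl. reflexivity. apply T00; auto. Qed.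

Lemma it_agree k : agree_lt k (it q k) (it q (S k)).
Proof.
  induction k. intros n i Hn; lia.
  change (agree_lt (S k) (T q (it q k)) (T q (it q (S k)))).
  apply T_agree; auto; apply it00.
Qed.

Lemma it_agree2 k m : (k <= m)%nat -> agree_lt k (it q k) (it q m).
Proof.
  intros Hkm. induction m.
  - assert (k = 0%nat) by lia. subst. apply agree_refl.
  - destruct (Nat.eq_dec k (S m)) as [e|ne]. subst. apply agree_refl.
    intros n i Hn. rewrite IHm by lia. apply it_agree. lia.
Qed.

Lemma Sstar_agree k : agree_lt k (Sstar q) (it q k).
Proof. intros n i Hn. unfold Sstar. apply it_agree2; lia. Qed.

Lemma Sstar_fix : forall n i, T q (Sstar q) n i = Sstar q n i.
Proof.
  intros n i.
  assert (H1 := T_agree q (S n) (Sstar q) (it q (S n)) Hq (it00 1) (it00 _) (Sstar_agree (S n))).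
  rewrite H1 by lia. change (T q (it q (S n))) with (it q (S (S n))).
  unfold Sstar. symmetry. apply it_agree2; lia.
Qed.

Lemma Sstar00 : Sstar q 0%nat 0%nat = 0.
Proof. apply it00. Qed.
End Fix.

Section Ball.
Variable q : nat -> R.
Hypothesis Hq : q 0%nat = 0.
Variable r : R.
Hypothesis Hr : 0 <= r.
Hypothesis Hqs : ex_series (fun m => Rabs (q m) * (3 * r) ^ m).
Hypothesis HK : Series (fun m => Rabs (q m) * (3 * r) ^ m) <= / 5.

Lemma Rabs_m1 : Rabs (-1) = 1. Proof. rewrite Rabs_left; lra. Qed.
Lemma Rabs_2 : Rabs 2 = 2. Proof. rewrite Rabs_right; lra. Qed.
Let Hrr : Rabs r <= r. Proof. rewrite Rabs_right; lra. Qed.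

Lemma exNS A s : NS r A s -> ex_series (Hp A r r).
Proof. intros [_ H]; eexists; eauto. Qed.

Lemma T_all a : a 0%nat 0%nat = 0 -> ex_series (Hp (absA a) r r) -> Nn r a <= 2 * r ->
  (ex_series (Hp (absA (T q a)) r r) /\ Nn r (T q a) <= 2 * r) /\
  (forall x y, Rabs x <= r -> Rabs y <= r ->
     Rabs (y - ev a x y) <= 3 * r /\
     ex_series (fun m => q m * (y - ev a x y) ^ m) /\
     is_series (Hp (T q a) x y)
       (x + -1 * (ev a x y * (2 * Series (fun m => q m * (y - ev a x y) ^ m) +
             Series (fun m => q m * (y - ev a x y) ^ m) * Series (fun m => q m * (y - ev a x y) ^ m))))).
Proof.
  intros Ha0 Hex HN.
  assert (NA := NS_absA_self r a Hex).
  assert (HNpos : 0 <= Nn r a) by (apply (NS_nonneg_val r Hr (absA a)); auto).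
  set (VA := add Ya (scl (Rabs (-1)) (absA a))).
  assert (NV : NS r VA (r + Rabs (-1) * Nn r a)).
  { apply NS_add; auto. apply NS_Y; auto. apply NS_scl; auto. apply Rabs_pos. }
  set (sv := r + Rabs (-1) * Nn r a) in NV.
  assert (Hsv : 0 <= sv <= 3 * r) by (unfold sv; rewrite Rabs_m1; lra).
  assert (VA0 : VA 0%nat 0%nat = 0) by (unfold VA, add, scl, absA, Ya; rewrite Ha0; simpl; rewrite Rabs_R0; ring).
  assert (Hexq : ex_series (fun m => Rabs (q m) * sv ^ m)).
  { apply ex_series_Rle with (fun m => Rabs (q m) * (3 * r) ^ m); auto. intro m.
    rewrite Rabs_mult, Rabs_Rabsolu, <- RPow_abs. apply Rmult_le_compat_l. apply Rabs_pos.
    apply pow_incr. rewrite Rabs_right; lra. }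
  set (QA := comp (fun m => Rabs (q m)) VA).
  assert (NQ : NS r QA (Series (fun m => Rabs (q m) * sv ^ m))).
  { apply NS_comp; auto. intros; apply Rabs_pos. }
  set (sq := Series (fun m => Rabs (q m) * sv ^ m)) in NQ.
  assert (Hsq : 0 <= sq <= / 5).
  { split. apply (NS_nonneg_val r Hr QA); auto.
    eapply Rle_trans; [|apply HK]. apply Series_le; auto. intro m. split.
    apply Rmult_le_pos. apply Rabs_pos. apply pow_le; lra.
    apply Rmult_le_compat_l. apply Rabs_pos. apply pow_incr; lra. }
  set (Q2A := add (scl (Rabs 2) QA) (mul QA QA)).
  assert (NQ2 : NS r Q2A (Rabs 2 * sq + sq * sq)).
  { apply NS_add; auto. apply NS_scl; auto. apply Rabs_pos. apply NS_mul; auto. }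
  set (TA := add Xa (scl (Rabs (-1)) (mul (absA a) Q2A))).
  assert (NT : NS r TA (r + Rabs (-1) * (Nn r a * (Rabs 2 * sq + sq * sq)))).
  { apply NS_add; auto. apply NS_X; auto. apply NS_scl; auto. apply Rabs_pos. apply NS_mul; auto. }
  assert (mV : maj (Vof a) VA).
  { unfold Vof, sub, VA. apply maj_add. apply maj_self, nonneg_Y. apply maj_scl, maj_absA. }
  assert (mQ : maj (Qof q a) QA) by (apply maj_comp; auto).
  assert (mQ2 : maj (Q2 q a) Q2A).
  { unfold Q2, Q2A. apply maj_add. apply maj_scl; auto. apply maj_mul; auto. }
  assert (mT : maj (T q a) TA).
  { unfold T, sub, TA. apply maj_add. apply maj_self, nonneg_X. apply maj_scl. apply maj_mul; auto. apply maj_absA. }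
  split.
  { destruct (NS_bound r Hr (T q a) TA _ mT NT) as [H1 H2]. split; auto.
    eapply Rle_trans; [exact H2|]. rewrite Rabs_m1, Rabs_2.
    destruct Hsq as [Hs1 Hs2].
    assert (2 * sq + sq * sq <= 2 / 5 + / 25) by nra.
    assert (Nn r a * (2 * sq + sq * sq) <= 2 * r * (2 / 5 + / 25)).
    { apply Rmult_le_compat; nra. }
    lra. }
  intros x y Hx Hy.
  assert (V0 : Vof a 0%nat 0%nat = 0) by (unfold Vof, sub, add, scl, Ya; rewrite Ha0; simpl; ring).
  assert (EV : is_series (Hp (Vof a) x y) (y + -1 * ev a x y)).
  { unfold Vof, sub.
    replace (y + -1 * ev a x y) with (ev Ya x y + ev (scl (-1) a) x y).
    2:{ unfold ev at 1; rewrite (is_series_unique _ _ (Y_series x y)). f_equal.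
        apply is_series_unique; apply scl_series with (absA a) r; auto; apply maj_absA. }
    apply add_series with Ya (scl (Rabs (-1)) (absA a)) r; auto.
    apply maj_self, nonneg_Y. apply maj_scl, maj_absA. apply exNS with r; apply NS_Y; auto.
    apply exNS with (Rabs (-1) * Nn r a). apply NS_scl; auto. apply Rabs_pos. }
  replace (y + -1 * ev a x y) with (y - ev a x y) in EV by ring.
  assert (HevV : ev (Vof a) x y = y - ev a x y) by (apply is_series_unique; auto).
  assert (Hsv' : Series (Hp VA r r) = sv) by (apply is_series_unique; destruct NV; auto).
  destruct (comp_series q (Vof a) VA x y r) as [C1 C2]; auto.
  { apply exNS with sv; auto. }
  { rewrite Hsv'. eapply ex_series_ext; [|exact Hexq]. intro m; reflexivity. }
  rewrite HevV in C1, C2.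
  set (Qv := Series (fun m => q m * (y - ev a x y) ^ m)) in *.
  split.
  { rewrite <- HevV. destruct (ev_ok (Vof a) VA x y r) as [_ [_ H3]]; auto.
    apply exNS with sv; auto. lra. }
  split; auto.
  assert (EQ : ev (Qof q a) x y = Qv) by (apply is_series_unique; auto).
  assert (EQ2 : is_series (Hp (Q2 q a) x y) (2 * Qv + Qv * Qv)).
  { unfold Q2.
    replace (2 * Qv + Qv * Qv) with (ev (scl 2 (Qof q a)) x y + ev (mul (Qof q a) (Qof q a)) x y).
    2:{ rewrite <- EQ. f_equal; apply is_series_unique.
        apply scl_series with QA r; auto. apply exNS with sq; auto.
        apply mul_series with QA QA r; auto; apply exNS with sq; auto. }
    apply add_series with (scl (Rabs 2) QA) (mul QA QA) r; auto.
    apply maj_scl; auto. apply maj_mul; auto.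
    apply exNS with (Rabs 2 * sq). apply NS_scl; auto. apply Rabs_pos.
    apply exNS with (sq * sq). apply NS_mul; auto. }
  unfold T, sub.
  assert (EM : is_series (Hp (mul a (Q2 q a)) x y) (ev a x y * (2 * Qv + Qv * Qv))).
  { replace (2 * Qv + Qv * Qv) with (ev (Q2 q a) x y) by (apply is_series_unique; auto).
    apply mul_series with (absA a) Q2A r; auto. apply maj_absA. apply exNS with (Rabs 2 * sq + sq * sq); auto. }
  replace (x + -1 * (ev a x y * (2 * Qv + Qv * Qv))) with
     (ev Xa x y + ev (scl (-1) (mul a (Q2 q a))) x y).
  2:{ unfold ev at 1; rewrite (is_series_unique _ _ (X_series x y)). f_equal.
      apply is_series_unique. replace (ev a x y * (2 * Qv + Qv * Qv)) with (ev (mul a (Q2 q a)) x y)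
        by (apply is_series_unique; auto).
      apply scl_series with (mul (absA a) Q2A) r; auto. apply maj_mul; auto. apply maj_absA.
      apply exNS with (Nn r a * (Rabs 2 * sq + sq * sq)). apply NS_mul; auto. }
  apply add_series with Xa (scl (Rabs (-1)) (mul (absA a) Q2A)) r; auto.
  apply maj_self, nonneg_X. apply maj_scl, maj_mul; auto. apply maj_absA.
  apply exNS with r; apply NS_X; auto.
  apply exNS with (Rabs (-1) * (Nn r a * (Rabs 2 * sq + sq * sq))). apply NS_scl; auto. apply Rabs_pos. apply NS_mul; auto.
Qed.

Lemma it_bound k : ex_series (Hp (absA (it q k)) r r) /\ Nn r (it q k) <= 2 * r.
Proof.
  induction k.
  - assert (Hz : forall n, Hp (absA (it q 0)) r r n = 0).
    { intro n. unfold Hp. apply sum_zero. intros. unfold absA, it, zeroA. simpl. rewrite Rabs_R0. ring. }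
    assert (is_series (Hp (absA (it q 0)) r r) 0).
    { eapply is_series_ext. intro n; symmetry; apply Hz.
      change 0 with ((fun _ : nat => 0) 0%nat) at 2. apply is_series_single. auto. }
    split. eexists; eauto. unfold Nn. rewrite (is_series_unique _ _ H). lra.
  - destruct IHk as [H1 H2]. destruct (T_all (it q k)) as [[H3 H4] _]; auto. apply it00; auto.
Qed.

Lemma Hp_agree a b x y n : (forall i, a n i = b n i) -> Hp a x y n = Hp b x y n.
Proof. intros H. unfold Hp. apply sum_eq; intros. rewrite H. reflexivity. Qed.

Lemma Sstar_bound : ex_series (Hp (absA (Sstar q)) r r) /\ Nn r (Sstar q) <= 2 * r.
Proof.
  apply bounded_series. intro n; apply Hp_nonneg; auto; intros; apply Rabs_pos.
  intro N. destruct (it_bound (S N)) as [H1 H2].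
  eapply Rle_trans; [|exact H2].
  rewrite (sum_eq _ (Hp (absA (it q (S N))) r r)).
  apply partial_le_lim. intro n; apply Hp_nonneg; auto; intros; apply Rabs_pos.
  apply Series_correct; auto.
  intros n Hn. apply Hp_agree. intro i. unfold absA. rewrite (Sstar_agree q Hq (S N)); auto. lia.
Qed.

Lemma Sstar_eq x y : Rabs x <= r -> Rabs y <= r ->
  Rabs (y - ev (Sstar q) x y) <= 3 * r /\ ex_series (fun m => q m * (y - ev (Sstar q) x y) ^ m) /\
  ev (Sstar q) x y = x - ev (Sstar q) x y *
    (2 * Series (fun m => q m * (y - ev (Sstar q) x y) ^ m) +
     Series (fun m => q m * (y - ev (Sstar q) x y) ^ m) * Series (fun m => q m * (y - ev (Sstar q) x y) ^ m)).
Proof.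
  intros Hx Hy.
  destruct Sstar_bound as [B1 B2].
  destruct (T_all (Sstar q)) as [_ H]; auto. apply Sstar00; auto.
  destruct (H x y Hx Hy) as [H1 [H2 H3]].
  split; auto. split; auto.
  assert (E : ev (T q (Sstar q)) x y = ev (Sstar q) x y).
  { unfold ev. apply Series_ext. intro n. apply Hp_agree. intro i. apply Sstar_fix; auto. }
  rewrite <- E at 1. unfold ev at 1. rewrite (is_series_unique _ _ H3). ring.
Qed.
End Ball.

Lemma analytic2_from_arr (f : R -> R -> R) (F FA : arr) r s : 0 < r -> maj F FA -> NS r FA s ->
  (forall x y, Rabs x < r -> Rabs y < r -> f x y = ev F x y) -> analytic2_near0 f.
Proof.
  intros Hr HF [HFA HFs] Hf.
  exists (fun i j => F (i + j)%nat i), r. split; auto. intros x y Hx Hy.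
  assert (Hb : forall n (g : nat -> nat -> R), sum_f_R0 (fun i => g i (n - i)%nat) n =
      sum_f_R0 (fun i => g i (n - i)%nat) n) by auto.
  split.
  - apply ex_series_Rle with (Hp FA r r). 2: eexists; eauto.
    intro n. unfold Hp.
    rewrite Rabs_right.
    2:{ apply Rle_ge, sum_nonneg. intros i Hi. apply Rmult_le_pos; [apply Rmult_le_pos|];
        try apply Rabs_pos; apply pow_le, Rabs_pos. }
    apply sum_Rle. intros i Hi. replace (i + (n - i))%nat with n by lia.
    assert (0 <= Rabs x ^ i) by (apply pow_le, Rabs_pos).
    assert (0 <= Rabs y ^ (n - i)) by (apply pow_le, Rabs_pos).
    assert (Rabs x ^ i <= r ^ i) by (apply pow_incr; split; [apply Rabs_pos|lra]).
    assert (Rabs y ^ (n - i) <= r ^ (n - i)) by (apply pow_incr; split; [apply Rabs_pos|lra]).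
    assert (Rabs (F n i) <= FA n i) by auto.
    assert (0 <= Rabs (F n i)) by apply Rabs_pos.
    apply Rmult_le_compat; try apply Rmult_le_pos; auto.
    apply Rmult_le_compat; auto.
  - rewrite Hf by auto. unfold ev. apply Series_ext. intro n. unfold Hp.
    apply sum_eq. intros i Hi. replace (i + (n - i))%nat with n by lia. reflexivity.
Qed.

Section Fsec.
Variable q : nat -> R.
Hypothesis Hq : q 0%nat = 0.
Variable c : nat -> R.
Variable r : R.
Hypothesis Hr : 0 <= r.
Hypothesis Hqs : ex_series (fun m => Rabs (q m) * (3 * r) ^ m).
Hypothesis HK : Series (fun m => Rabs (q m) * (3 * r) ^ m) <= / 5.
Hypothesis Hcs : ex_series (fun m => Rabs (c m) * (3 * r) ^ m).

Let Hrr : Rabs r <= r. Proof. rewrite Rabs_right; lra. Qed.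

Definition Farr (a : arr) : arr :=
  add (scl 2 a) (add (scl 2 (mul a (Qof q a))) (comp c (Vof a))).

Lemma F_all a : a 0%nat 0%nat = 0 -> ex_series (Hp (absA a) r r) -> Nn r a <= 2 * r ->
  (exists FA s, maj (Farr a) FA /\ NS r FA s) /\
  (forall x y, Rabs x <= r -> Rabs y <= r ->
     ex_series (fun m => q m * (y - ev a x y) ^ m) /\
     ex_series (fun m => c m * (y - ev a x y) ^ m) /\
     ev (Farr a) x y = 2 * ev a x y + 2 * (ev a x y * Series (fun m => q m * (y - ev a x y) ^ m))
        + Series (fun m => c m * (y - ev a x y) ^ m)).
Proof.
  intros Ha0 Hex HN.
  assert (NA := NS_absA_self r a Hex).
  assert (HNpos : 0 <= Nn r a) by (apply (NS_nonneg_val r Hr (absA a)); auto).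
  set (VA := add Ya (scl (Rabs (-1)) (absA a))).
  assert (NV : NS r VA (r + Rabs (-1) * Nn r a)).
  { apply NS_add; auto. apply NS_Y; auto. apply NS_scl; auto. apply Rabs_pos. }
  set (sv := r + Rabs (-1) * Nn r a) in NV.
  assert (Hsv : 0 <= sv <= 3 * r) by (unfold sv; rewrite Rabs_m1; lra).
  assert (VA0 : VA 0%nat 0%nat = 0) by (unfold VA, add, scl, absA, Ya; rewrite Ha0; simpl; rewrite Rabs_R0; ring).
  assert (Hexg : forall g : nat -> R, ex_series (fun m => Rabs (g m) * (3 * r) ^ m) ->
      ex_series (fun m => Rabs (g m) * sv ^ m)).
  { intros g Hg. apply ex_series_Rle with (fun m => Rabs (g m) * (3 * r) ^ m); auto. intro m.
    rewrite Rabs_mult, Rabs_Rabsolu, <- RPow_abs. apply Rmult_le_compat_l. apply Rabs_pos.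
    apply pow_incr. rewrite Rabs_right; lra. }
  set (QA := comp (fun m => Rabs (q m)) VA).
  assert (NQ : NS r QA (Series (fun m => Rabs (q m) * sv ^ m))).
  { apply NS_comp; auto. intros; apply Rabs_pos. }
  set (sq := Series (fun m => Rabs (q m) * sv ^ m)) in NQ.
  set (CA := comp (fun m => Rabs (c m)) VA).
  assert (NC : NS r CA (Series (fun m => Rabs (c m) * sv ^ m))).
  { apply NS_comp; auto. intros; apply Rabs_pos. }
  set (sc := Series (fun m => Rabs (c m) * sv ^ m)) in NC.
  set (FA := add (scl (Rabs 2) (absA a)) (add (scl (Rabs 2) (mul (absA a) QA)) CA)).
  assert (NF : NS r FA (Rabs 2 * Nn r a + (Rabs 2 * (Nn r a * sq) + sc))).
  { apply NS_add; auto. apply NS_scl; auto. apply Rabs_pos. apply NS_add; auto.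
    apply NS_scl; auto. apply Rabs_pos. apply NS_mul; auto. }
  assert (mV : maj (Vof a) VA).
  { unfold Vof, sub, VA. apply maj_add. apply maj_self, nonneg_Y. apply maj_scl, maj_absA. }
  assert (mQ : maj (Qof q a) QA) by (apply maj_comp; auto).
  assert (mC : maj (comp c (Vof a)) CA) by (apply maj_comp; auto).
  assert (mF : maj (Farr a) FA).
  { unfold Farr, FA. apply maj_add. apply maj_scl, maj_absA. apply maj_add; auto.
    apply maj_scl. apply maj_mul; auto. apply maj_absA. }
  split. { exists FA, (Rabs 2 * Nn r a + (Rabs 2 * (Nn r a * sq) + sc)). auto. }
  intros x y Hx Hy.
  assert (V0 : Vof a 0%nat 0%nat = 0) by (unfold Vof, sub, add, scl, Ya; rewrite Ha0; simpl; ring).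
  assert (EV : is_series (Hp (Vof a) x y) (y + -1 * ev a x y)).
  { unfold Vof, sub.
    replace (y + -1 * ev a x y) with (ev Ya x y + ev (scl (-1) a) x y).
    2:{ unfold ev at 1; rewrite (is_series_unique _ _ (Y_series x y)). f_equal.
        apply is_series_unique; apply scl_series with (absA a) r; auto; apply maj_absA. }
    apply add_series with Ya (scl (Rabs (-1)) (absA a)) r; auto.
    apply maj_self, nonneg_Y. apply maj_scl, maj_absA. apply exNS with r; apply NS_Y; auto.
    apply exNS with (Rabs (-1) * Nn r a). apply NS_scl; auto. apply Rabs_pos. }
  replace (y + -1 * ev a x y) with (y - ev a x y) in EV by ring.
  assert (HevV : ev (Vof a) x y = y - ev a x y) by (apply is_series_unique; auto).
  assert (Hsv' : Series (Hp VA r r) = sv) by (apply is_series_unique; destruct NV; auto).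
  destruct (comp_series q (Vof a) VA x y r) as [C1 C2]; auto.
  { apply exNS with sv; auto. }
  { rewrite Hsv'. apply Hexg; auto. }
  destruct (comp_series c (Vof a) VA x y r) as [D1 D2]; auto.
  { apply exNS with sv; auto. }
  { rewrite Hsv'. apply Hexg; auto. }
  rewrite HevV in C1, C2, D1, D2.
  split; auto. split; auto.
  assert (EQ : ev (Qof q a) x y = Series (fun m => q m * (y - ev a x y) ^ m)) by (apply is_series_unique; auto).
  assert (EC : ev (comp c (Vof a)) x y = Series (fun m => c m * (y - ev a x y) ^ m)) by (apply is_series_unique; auto).
  rewrite <- EQ, <- EC.
  assert (EM : ev (mul a (Qof q a)) x y = ev a x y * ev (Qof q a) x y).
  { apply is_series_unique. apply mul_series with (absA a) QA r; auto. apply maj_absA. apply exNS with sq; auto. }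
  rewrite <- EM.
  assert (E2 : forall b B s, maj b B -> NS r B s -> ev (scl 2 b) x y = 2 * ev b x y).
  { intros b B s0 Hb HB. apply is_series_unique. apply scl_series with B r; auto. apply exNS with s0; auto. }
  rewrite <- (E2 a (absA a) (Nn r a)) by (auto; apply maj_absA).
  rewrite <- (E2 (mul a (Qof q a)) (mul (absA a) QA) (Nn r a * sq)) by (try apply maj_mul; try apply maj_absA; auto; apply NS_mul; auto).
  unfold Farr. rewrite Rplus_assoc.
  assert (Einner : ev (add (scl 2 (mul a (Qof q a))) (comp c (Vof a))) x y =
     ev (scl 2 (mul a (Qof q a))) x y + ev (comp c (Vof a)) x y).
  { apply is_series_unique.
    apply add_series with (scl (Rabs 2) (mul (absA a) QA)) CA r; auto.
    apply maj_scl, maj_mul; auto. apply maj_absA.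
    apply exNS with (Rabs 2 * (Nn r a * sq)). apply NS_scl; auto. apply Rabs_pos. apply NS_mul; auto.
    apply exNS with sc; auto. }
  rewrite <- Einner.
  apply is_series_unique.
  apply add_series with (scl (Rabs 2) (absA a)) (add (scl (Rabs 2) (mul (absA a) QA)) CA) r; auto.
  apply maj_scl, maj_absA. apply maj_add; auto. apply maj_scl, maj_mul; auto. apply maj_absA.
  apply exNS with (Rabs 2 * Nn r a). apply NS_scl; auto. apply Rabs_pos.
  apply exNS with (Rabs 2 * (Nn r a * sq) + sc). apply NS_add; auto. apply NS_scl; auto. apply Rabs_pos. apply NS_mul; auto.
Qed.
End Fsec.

Lemma ball_R (x y : R) (e : posreal) : ball x e y <-> Rabs (y - x) < e.
Proof. unfold ball; simpl; unfold AbsRing_ball, abs, minus, plus, opp; simpl. tauto. Qed.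

Lemma locally_R (P : R -> Prop) x : locally x P -> exists e, 0 < e /\ forall y, Rabs (y - x) < e -> P y.
Proof.
  intros [e He]. exists e. split. apply cond_pos. intros y Hy. apply He. apply ball_R; auto.
Qed.

Lemma locally_R' (P : R -> Prop) x e : 0 < e -> (forall y, Rabs (y - x) < e -> P y) -> locally x P.
Proof.
  intros He H. exists (mkposreal e He). intros y Hy. apply H. apply ball_R in Hy. auto.
Qed.

Lemma deriv_one (z : R -> R) : id_plus_O2_1 z -> z 0 = 0 /\ Derive z 0 = 1.
Proof.
  intros [C [d [Hd Hz]]].
  assert (Hz0 : z 0 = 0).
  { specialize (Hz 0 ltac:(rewrite Rabs_R0; lra)). simpl in Hz.
    rewrite Rmult_0_l, Rmult_0_r, Rminus_0_r in Hz. apply Rabs_le_between in Hz.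
    destruct Hz; lra. }
  split; auto. apply is_derive_unique. apply is_derive_Reals.
  intros eps Heps.
  assert (Hd' : 0 < Rmin d (eps / (Rabs C + 1))).
  { apply Rmin_pos; auto. apply Rdiv_lt_0_compat; auto. pose proof (Rabs_pos C); lra. }
  exists (mkposreal _ Hd'). simpl. intros h Hh0 Hh.
  assert (Hh1 : Rabs h < d) by (eapply Rlt_le_trans; [exact Hh|apply Rmin_l]).
  assert (Hh2 : Rabs h < eps / (Rabs C + 1)) by (eapply Rlt_le_trans; [exact Hh|apply Rmin_r]).
  specialize (Hz h Hh1).
  rewrite Rplus_0_l, Hz0.
  replace ((z h - 0) / h - 1) with ((z h - h) / h) by (field; auto).
  unfold Rdiv. rewrite Rabs_mult, Rabs_inv.
  assert (Hah : 0 < Rabs h) by (apply Rabs_pos_lt; auto).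
  apply Rle_lt_trans with (Rabs C * Rabs h).
  { apply Rmult_le_reg_r with (Rabs h); auto. rewrite Rmult_assoc, Rinv_l by lra.
    eapply Rle_trans. rewrite Rmult_1_r. exact Hz.
    replace (h ^ 2) with (Rabs h * Rabs h) by (simpl; rewrite <- Rabs_mult, Rabs_right; [ring|]; nra).
    assert (C <= Rabs C) by apply Rle_abs. nra. }
  assert (Rabs C * Rabs h <= Rabs C * (eps / (Rabs C + 1))) by (apply Rmult_le_compat_l; [apply Rabs_pos|lra]).
  assert (Rabs C * (eps / (Rabs C + 1)) < eps).
  { assert (0 <= Rabs C) by apply Rabs_pos. unfold Rdiv.
    apply Rmult_lt_reg_r with (Rabs C + 1); [lra|].
    rewrite Rmult_assoc, Rmult_assoc, Rinv_l by lra. nra. }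
  lra.
Qed.

Lemma minmax_abs a b x d : Rmin a b <= x <= Rmax a b -> Rabs a <= d -> Rabs b <= d -> Rabs x <= d.
Proof.
  intros [H1 H2] Ha Hb. apply Rabs_le_between in Ha. apply Rabs_le_between in Hb.
  apply Rabs_le_between. unfold Rmin, Rmax in *. destruct (Rle_dec a b); lra.
Qed.

Lemma p_props (z : R -> R) : C2_near0 z -> Derive z 0 = 1 ->
  exists dl M, 0 < dl /\ 0 < M /\
   (forall a b, Rabs a <= dl -> Rabs b <= dl -> Rabs (Derive z a - Derive z b) <= M * Rabs (a - b)) /\
   (forall w, Rabs w <= dl -> Rabs (Derive z w - 1) <= M * Rabs w /\ 1/2 <= Derive z w <= 3/2).
Proof.
  intros [d0 [Hd0 HC]] Hp0.
  destruct (HC 0 ltac:(rewrite Rabs_R0; lra)) as [_ [_ Hc0]].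
  assert (Hc1 : continuity_pt (Derive_n z 2) 0) by (apply continuity_pt_filterlim; exact Hc0).
  assert (Hc3 := proj1 (continuity_pt_locally _ _) Hc1).
  destruct (locally_R _ _ (Hc3 (mkposreal 1 Rlt_0_1))) as [d2 [Hd2 Hc2]]. simpl in Hc2.
  set (M := Rabs (Derive_n z 2 0) + 1).
  assert (HM : 0 < M) by (unfold M; pose proof (Rabs_pos (Derive_n z 2 0)); lra).
  set (dl := Rmin (Rmin (d0 / 2) (d2 / 2)) (1 / (2 * M))).
  assert (Hdl : 0 < dl).
  { unfold dl. repeat apply Rmin_pos; try lra. apply Rdiv_lt_0_compat; lra. }
  assert (Hdl1 : dl <= d0 / 2) by (unfold dl; eapply Rle_trans; [apply Rmin_l|apply Rmin_l]).
  assert (Hdl2 : dl <= d2 / 2) by (unfold dl; eapply Rle_trans; [apply Rmin_l|apply Rmin_r]).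
  assert (Hdl3 : dl <= 1 / (2 * M)) by (unfold dl; apply Rmin_r).
  assert (Lip : forall a b, Rabs a <= dl -> Rabs b <= dl -> Rabs (Derive z a - Derive z b) <= M * Rabs (a - b)).
  { intros a b Ha Hb.
    destruct (MVT_gen (Derive z) b a (Derive (Derive z))) as [c [Hc Heq]].
    - intros x Hx. apply Derive_correct.
      assert (Rabs x <= dl) by (apply minmax_abs with b a; auto; lra).
      apply (HC x ltac:(lra)).
    - intros x Hx. apply continuity_pt_filterlim.
      assert (Rabs x <= dl) by (apply minmax_abs with b a; auto).
      apply (ex_derive_continuous (K:=R_AbsRing) (V:=R_NormedModule) (Derive z) x).
      apply (HC x ltac:(lra)).
    - rewrite Heq. rewrite Rabs_mult. apply Rmult_le_compat_r. apply Rabs_pos.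
      assert (Hcd : Rabs c <= dl) by (apply minmax_abs with b a; auto).
      specialize (Hc2 c ltac:(rewrite Rminus_0_r; lra)).
      change (Derive (Derive z) c) with (Derive_n z 2 c).
      unfold M. pose proof (Rabs_triang_inv (Derive_n z 2 c) (Derive_n z 2 0)). change (Rabs (Derive_n z 2 c - Derive_n z 2 0) < 1) in Hc2. lra. }
  exists dl, M. repeat split; auto.
  - specialize (Lip w 0 H ltac:(rewrite Rabs_R0; lra)). rewrite Hp0, Rminus_0_r in Lip. auto.
  - specialize (Lip w 0 H ltac:(rewrite Rabs_R0; lra)). rewrite Hp0, Rminus_0_r in Lip.
    assert (M * Rabs w <= 1/2).
    { apply Rle_trans with (M * (1 / (2 * M))). apply Rmult_le_compat_l; lra.
      field_simplify; lra. }
    apply Rabs_le_between in Lip. lra.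
  - specialize (Lip w 0 H ltac:(rewrite Rabs_R0; lra)). rewrite Hp0, Rminus_0_r in Lip.
    assert (M * Rabs w <= 1/2).
    { apply Rle_trans with (M * (1 / (2 * M))). apply Rmult_le_compat_l; lra.
      field_simplify; lra. }
    apply Rabs_le_between in Lip. lra.
Qed.

Lemma uniq_sol (p : R -> R) dl M x y a b : 0 < M ->
  (forall a b, Rabs a <= dl -> Rabs b <= dl -> Rabs (p a - p b) <= M * Rabs (a - b)) ->
  (forall w, Rabs w <= dl -> 1/2 <= p w <= 3/2) ->
  Rabs a <= dl -> Rabs b <= dl -> 48 * M * Rabs x < 1 ->
  y = x / (p a) ^ 2 + a -> y = x / (p b) ^ 2 + b -> a = b.
Proof.
  intros HM Lip Hb Ha' Hb' Hx Ea Eb.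
  destruct (Hb a Ha') as [pa1 pa2]. destruct (Hb b Hb') as [pb1 pb2].
  set (pa := p a) in *. set (pb := p b) in *.
  assert (E : (a - b) * (pa ^ 2 * pb ^ 2) = x * ((pa - pb) * (pa + pb))).
  { assert (Hd : a - b = x / pb ^ 2 - x / pa ^ 2) by lra.
    rewrite Hd. field. lra. }
  assert (L := Lip a b Ha' Hb'). fold pa pb in L.
  set (P := pa ^ 2 * pb ^ 2) in *.
  assert (A1 : 1/4 <= pa ^ 2) by (simpl; nra).
  assert (A2 : 1/4 <= pb ^ 2) by (simpl; nra).
  assert (Hpp : / 16 <= P).
  { unfold P. apply Rle_trans with (1/4 * (1/4)). lra. apply Rmult_le_compat; lra. }
  assert (E2 : Rabs (a - b) * P = Rabs x * (Rabs (pa - pb) * (pa + pb))).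
  { rewrite <- (Rabs_right P) by lra. rewrite <- (Rabs_right (pa + pb)) by lra.
    rewrite <- !Rabs_mult. rewrite E. reflexivity. }
  assert (Hab : 0 <= Rabs (a - b)) by apply Rabs_pos.
  assert (Hxx : 0 <= Rabs x) by apply Rabs_pos.
  assert (H1 : Rabs (a - b) * / 16 <= Rabs (a - b) * P) by (apply Rmult_le_compat_l; lra).
  assert (H2 : Rabs x * (Rabs (pa - pb) * (pa + pb)) <= Rabs x * (M * Rabs (a - b) * 3)).
  { apply Rmult_le_compat_l; auto. apply Rmult_le_compat; try lra. apply Rabs_pos. }
  assert (H3 : Rabs (a - b) * (/ 16 - 3 * M * Rabs x) <= 0) by nra.
  assert (H4 : 0 < / 16 - 3 * M * Rabs x) by lra.
  assert (H5 : Rabs (a - b) <= 0).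
  { apply Rmult_le_reg_r with (/ 16 - 3 * M * Rabs x); auto. lra. }
  assert (Rabs (a - b) = 0) by lra.
  apply Rabs_eq_0 in H. lra.
Qed.

Lemma sum_O2 (z : R -> R) (tt : R -> R -> R) :
  C2_near0 z -> local_solution z tt -> id_plus_O2_1 z -> sum_plus_O2_2 (f_of z tt).
Proof.
  intros HC [LS1 [d2 [Hd2 LS2]]] Hid.
  destruct (deriv_one z Hid) as [Hz0 Hp0].
  destruct (p_props z HC Hp0) as [dl [M [Hdl [HM [Lip Pb]]]]].
  destruct Hid as [C [dI [HdI HI]]].
  destruct (LS1 (Rmin dl dI)) as [d5 [Hd5 H5]]. apply Rmin_pos; auto.
  exists (32 * (4 * M ^ 2 + Rabs C)), (Rmin 1 (Rmin d5 d2)).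
  split. repeat apply Rmin_pos; lra.
  intros x y Hx Hy.
  assert (Hx1 : Rabs x < 1) by (eapply Rlt_le_trans; [exact Hx|apply Rmin_l]).
  assert (Hx5 : Rabs x < d5) by (eapply Rlt_le_trans; [exact Hx|eapply Rle_trans; [apply Rmin_r|apply Rmin_l]]).
  assert (Hy5 : Rabs y < d5) by (eapply Rlt_le_trans; [exact Hy|eapply Rle_trans; [apply Rmin_r|apply Rmin_l]]).
  assert (Hx2 : Rabs x < d2) by (eapply Rlt_le_trans; [exact Hx|eapply Rle_trans; [apply Rmin_r|apply Rmin_r]]).
  assert (Hy2 : Rabs y < d2) by (eapply Rlt_le_trans; [exact Hy|eapply Rle_trans; [apply Rmin_r|apply Rmin_r]]).
  specialize (H5 x y Hx5 Hy5). specialize (LS2 x y Hx2 Hy2).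
  unfold f_of. set (t := tt x y) in *. set (p := Derive z t) in *.
  assert (Htl : Rabs t <= dl) by (left; eapply Rlt_le_trans; [exact H5|apply Rmin_l]).
  assert (HtI : Rabs t < dI) by (eapply Rlt_le_trans; [exact H5|apply Rmin_r]).
  destruct (Pb t Htl) as [Hp1 [Hp2 Hp3]]. fold p in Hp1, Hp2, Hp3.
  specialize (HI t HtI).
  set (s := x / p ^ 2).
  assert (Hxs : x = s * p ^ 2) by (unfold s; field; lra).
  assert (Hys : y = s + t) by (unfold s; lra).
  assert (Hf : 2 * x / p + z t - (x + y) = - s * (p - 1) ^ 2 + (z t - t)).
  { rewrite Hxs, Hys. field. lra. }
  rewrite Hf.
  assert (Hs : Rabs s <= 4 * Rabs x).
  { unfold s, Rdiv. rewrite Rabs_mult, Rabs_inv.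
    rewrite (Rabs_right (p ^ 2)) by (apply Rle_ge, pow_le; lra).
    assert (1/4 <= p ^ 2) by (simpl; nra).
    assert (0 <= Rabs x) by apply Rabs_pos.
    apply Rmult_le_reg_r with (p ^ 2). lra.
    rewrite Rmult_assoc, Rinv_l by lra. nra. }
  assert (Hq : (p - 1) ^ 2 <= M ^ 2 * t ^ 2).
  { rewrite <- (pow2_abs (p - 1)), <- (pow2_abs t).
    replace (M ^ 2 * Rabs t ^ 2) with ((M * Rabs t) ^ 2) by ring.
    apply pow_incr. split. apply Rabs_pos. auto. }
  assert (Hs2 : s ^ 2 <= 16 * x ^ 2).
  { rewrite <- (pow2_abs s), <- (pow2_abs x).
    replace (16 * Rabs x ^ 2) with ((4 * Rabs x) ^ 2) by ring.
    apply pow_incr. split. apply Rabs_pos. auto. }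
  assert (Ht2 : t ^ 2 <= 32 * (x ^ 2 + y ^ 2)).
  { replace t with (y - s) by lra. assert (0 <= (y + s) ^ 2) by apply pow2_ge_0.
    assert (0 <= x ^ 2) by apply pow2_ge_0. nra. }
  assert (HCa : C * t ^ 2 <= Rabs C * t ^ 2).
  { apply Rmult_le_compat_r. apply pow2_ge_0. apply Rle_abs. }
  assert (Hxa : 0 <= Rabs x) by apply Rabs_pos.
  assert (HM2 : 0 <= M ^ 2) by apply pow2_ge_0.
  assert (Hpq : 0 <= (p - 1) ^ 2) by apply pow2_ge_0.
  assert (Hst : Rabs s * (p - 1) ^ 2 <= 4 * M ^ 2 * t ^ 2).
  { apply Rle_trans with (4 * Rabs x * (M ^ 2 * t ^ 2)).
    apply Rmult_le_compat; auto; apply Rabs_pos.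
    assert (0 <= M ^ 2 * t ^ 2) by (apply Rmult_le_pos; auto; apply pow2_ge_0). nra. }
  eapply Rle_trans. apply Rabs_triang.
  rewrite Rabs_mult, Rabs_Ropp, (Rabs_right ((p - 1) ^ 2)) by lra.
  assert (0 <= Rabs C) by apply Rabs_pos.
  assert (0 <= t ^ 2) by apply pow2_ge_0.
  assert ((4 * M ^ 2 + Rabs C) * t ^ 2 <= (4 * M ^ 2 + Rabs C) * (32 * (x ^ 2 + y ^ 2)))
    by (apply Rmult_le_compat_l; lra).
  lra.
Qed.

Lemma sum_pow0 (h : nat -> R) n : sum_f_R0 (fun i => h i * 0 ^ i) n = h 0%nat.
Proof. induction n; simpl. ring. rewrite IHn. ring. Qed.

Lemma forward_dir (z : R -> R) (tt : R -> R -> R) : local_solution z tt ->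
  analytic2_near0 (f_of z tt) -> sum_plus_O2_2 (f_of z tt) -> analytic1_near0 z /\ id_plus_O2_1 z.
Proof.
  intros [_ [d2 [Hd2 LS2]]] [a [r [Hr Ha]]] [C [d [Hd HO]]].
  assert (Hf0 : forall y, Rabs y < d2 -> f_of z tt 0 y = z y).
  { intros y Hy. assert (H0 : Rabs 0 < d2) by (rewrite Rabs_R0; auto).
    specialize (LS2 0 y H0 Hy). unfold f_of.
    replace (tt 0 y) with y by (rewrite LS2 at 1; unfold Rdiv; ring). unfold Rdiv. ring. }
  assert (H0r : Rabs 0 < r) by (rewrite Rabs_R0; auto).
  split.
  - exists (fun n => a 0%nat n), (Rmin r d2). split. apply Rmin_pos; auto.
    intros x Hx.
    assert (Hxr : Rabs x < r) by (eapply Rlt_le_trans; [exact Hx|apply Rmin_l]).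
    assert (Hx2 : Rabs x < d2) by (eapply Rlt_le_trans; [exact Hx|apply Rmin_r]).
    destruct (Ha 0 x H0r Hxr) as [E1 E2]. split.
    + eapply ex_series_ext; [|exact E1]. intro n. rewrite Rabs_R0.
      rewrite (sum_eq _ (fun i => (Rabs (a i (n - i)%nat) * Rabs x ^ (n - i)) * 0 ^ i)).
      rewrite sum_pow0. rewrite Nat.sub_0_r. reflexivity.
      intros; ring.
    + rewrite <- Hf0 by auto. rewrite E2. apply Series_ext. intro n.
      rewrite (sum_eq _ (fun i => (a i (n - i)%nat * x ^ (n - i)) * 0 ^ i)).
      rewrite sum_pow0. rewrite Nat.sub_0_r. reflexivity.
      intros; ring.
  - exists C, (Rmin d d2). split. apply Rmin_pos; auto.
    intros x Hx.
    assert (Hxd : Rabs x < d) by (eapply Rlt_le_trans; [exact Hx|apply Rmin_l]).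
    assert (Hx2 : Rabs x < d2) by (eapply Rlt_le_trans; [exact Hx|apply Rmin_r]).
    assert (H0d : Rabs 0 < d) by (rewrite Rabs_R0; auto).
    specialize (HO 0 x H0d Hxd). rewrite Hf0 in HO by auto.
    replace (z x - x) with (z x - (0 + x)) by ring.
    replace (C * x ^ 2) with (C * (0 ^ 2 + x ^ 2)) by (simpl; ring). auto.
Qed.

Lemma radius_of (c : nat -> R) r0 :
  (forall x, Rabs x < r0 -> ex_series (fun n => Rabs (c n) * Rabs x ^ n)) ->
  forall w, Rabs w < r0 -> Rbar_lt (Rabs w) (CV_radius c).
Proof.
  intros Hc w Hw. set (w' := (Rabs w + r0) / 2).
  assert (Hw' : Rabs w < w' < r0) by (unfold w'; lra).
  assert (Hd : CV_disk c w').
  { unfold CV_disk. eapply ex_series_ext; [|apply (Hc w')].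
    intro n. simpl. rewrite Rabs_mult, <- RPow_abs. reflexivity.
    rewrite Rabs_right; [lra|]. pose proof (Rabs_pos w); lra. }
  destruct (Lub_Rbar_correct (CV_disk c)) as [Hub _].
  eapply Rbar_lt_le_trans; [|apply (Hub w' Hd)]. simpl. lra.
Qed.

Lemma pow_le_first a m : 0 <= a <= 1 -> (1 <= m)%nat -> a ^ m <= a.
Proof.
  intros Ha Hm. destruct m. lia. simpl.
  assert (a ^ m <= 1) by (rewrite <- (pow1 m); apply pow_incr; lra).
  assert (0 <= a ^ m) by (apply pow_le; lra). nra.
Qed.

Lemma reverse_dir (z : R -> R) (tt : R -> R -> R) :
  C2_near0 z -> local_solution z tt -> analytic1_near0 z -> id_plus_O2_1 z ->
  analytic2_near0 (f_of z tt).
Proof.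
  intros HC Hls [c [r0 [Hr0 Ha1]]] Hid.
  destruct (deriv_one z Hid) as [Hz0 Hp0].
  destruct (p_props z HC Hp0) as [dl [M [Hdl [HM [Lip Pb]]]]].
  destruct Hls as [LS1 [d2 [Hd2 LS2]]].
  assert (Hrad := radius_of c r0 (fun x Hx => proj1 (Ha1 x Hx))).
  assert (HzP : forall w, Rabs w < r0 -> z w = PSeries c w).
  { intros w Hw. rewrite (proj2 (Ha1 w Hw)). reflexivity. }
  assert (HD : forall w, Rabs w < r0 -> Derive z w = PSeries (PS_derive c) w).
  { intros w Hw. rewrite <- Derive_PSeries by auto. apply Derive_ext_loc.
    apply locally_R' with (r0 - Rabs w). lra. intros u Hu. apply HzP.
    pose proof (Rabs_triang_inv u w). assert (Rabs (u - w) >= 0) by (apply Rle_ge, Rabs_pos).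
    pose proof (Rabs_triang (u - w) w). replace (u - w + w) with u in H1 by ring. lra. }
  assert (Hc1 : PS_derive c 0 = 1).
  { rewrite <- PSeries_0, <- HD, Hp0; auto. rewrite Rabs_R0; auto. }
  set (q := fun m => PS_derive c m - (if Nat.eqb m 0 then 1 else 0)).
  assert (Hq0 : q 0%nat = 0) by (unfold q; simpl; rewrite Hc1; ring).
  assert (Hind : forall w, is_series (fun m => (if Nat.eqb m 0 then 1 else 0) * w ^ m) 1).
  { intro w. assert (Hs := is_series_single (fun m => (if Nat.eqb m 0 then 1 else 0) * w ^ m) 0%nat).
    simpl in Hs. rewrite Rmult_1_l in Hs. apply Hs. intros n Hn. destruct n; [lia|]. simpl. ring. }
  assert (HexD : forall w, Rabs w < r0 -> ex_series (fun m => PS_derive c m * w ^ m)).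
  { intros w Hw. apply ex_series_Rabs. apply CV_disk_inside. rewrite CV_radius_derive. auto. }
  assert (HQ : forall w, Rabs w < r0 -> ex_series (fun m => q m * w ^ m) /\
                 Derive z w = 1 + Series (fun m => q m * w ^ m)).
  { intros w Hw.
    assert (E : is_series (fun m => q m * w ^ m) (PSeries (PS_derive c) w - 1)).
    { eapply is_series_ext; [|apply is_series_minusR; [apply Series_correct, HexD, Hw|apply (Hind w)]].
      intro n. unfold q. simpl. ring. }
    split. eexists; eauto. rewrite (is_series_unique _ _ E), HD; auto. ring. }
  set (R1 := r0 / 2).
  assert (HR1 : 0 < R1 /\ R1 < r0) by (unfold R1; lra).
  assert (Hqs1 : ex_series (fun m => Rabs (q m) * R1 ^ m)).
  { apply ex_series_Rle with (fun m => Rabs (PS_derive c m * R1 ^ m) + (if Nat.eqb m 0 then 1 else 0) * R1 ^ m).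
    - intro m. rewrite Rabs_mult, Rabs_Rabsolu, <- RPow_abs, (Rabs_right R1) by lra.
      unfold q. rewrite Rabs_mult, <- RPow_abs, (Rabs_right R1) by lra.
      assert (0 <= R1 ^ m) by (apply pow_le; lra).
      destruct (Nat.eqb m 0).
      + pose proof (Rabs_triang (PS_derive c m) (-1)). replace (Rabs (-1)) with 1 in H0 by (rewrite Rabs_left; lra).
        replace (PS_derive c m - 1) with (PS_derive c m + - 1) by ring. nra.
      + rewrite Rminus_0_r. lra.
    - apply (ex_series_plus (K:=R_AbsRing) (V:=R_NormedModule)).
      apply CV_disk_inside. rewrite CV_radius_derive. apply Hrad. rewrite Rabs_right; lra.
      eexists; apply Hind. }
  set (K1 := Series (fun m => Rabs (q m) * R1 ^ m)).
  assert (HK1 : 0 <= K1).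
  { unfold K1. eapply Rle_trans; [|apply (partial_le_lim (fun m => Rabs (q m) * R1 ^ m) _ 0); [|apply Series_correct; auto]].
    simpl. apply Rmult_le_pos; [apply Rabs_pos|lra]. intro; apply Rmult_le_pos; [apply Rabs_pos|apply pow_le; lra]. }
  set (rs := R1 / (15 * (K1 + 1))).
  assert (Hrs : 0 < rs) by (unfold rs; apply Rdiv_lt_0_compat; lra).
  assert (Hrs15 : 15 * rs * (K1 + 1) = R1) by (unfold rs; field; lra).
  assert (Kbound : forall r, 0 <= r <= rs -> ex_series (fun m => Rabs (q m) * (3 * r) ^ m) /\
              Series (fun m => Rabs (q m) * (3 * r) ^ m) <= / 5).
  { intros r Hr.
    assert (Hle : forall m, 0 <= Rabs (q m) * (3 * r) ^ m <= 3 * r / R1 * (Rabs (q m) * R1 ^ m)).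
    { intro m. split. apply Rmult_le_pos; [apply Rabs_pos|apply pow_le; lra].
      destruct m. rewrite Hq0, Rabs_R0. simpl. lra.
      replace ((3 * r) ^ S m) with ((3 * r / R1) ^ S m * R1 ^ S m) by (rewrite <- Rpow_mult_distr; f_equal; field; lra).
      assert ((3 * r / R1) ^ S m <= 3 * r / R1).
      { apply pow_le_first; [|lia]. split. apply Rdiv_le_0_compat; lra.
        apply Rmult_le_reg_r with R1; [lra|]. unfold Rdiv. rewrite Rmult_assoc, Rinv_l by lra. nra. }
      assert (0 <= R1 ^ S m) by (apply pow_le; lra).
      assert (0 <= Rabs (q (S m))) by apply Rabs_pos.
      assert (0 <= (3 * r / R1) ^ S m) by (apply pow_le, Rdiv_le_0_compat; lra).
      replace (Rabs (q (S m)) * ((3 * r / R1) ^ S m * R1 ^ S m)) with ((3 * r / R1) ^ S m * (Rabs (q (S m)) * R1 ^ S m)) by ring.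
      apply Rmult_le_compat_r; auto. apply Rmult_le_pos; auto. }
    assert (Hex3 : ex_series (fun m => 3 * r / R1 * (Rabs (q m) * R1 ^ m))).
    { eexists. apply is_series_scalR. apply Series_correct; auto. }
    split. apply ex_series_Rle with (fun m => 3 * r / R1 * (Rabs (q m) * R1 ^ m)); auto.
    intro m. rewrite Rabs_right. apply Hle. apply Rle_ge, Hle.
    eapply Rle_trans. apply (Series_le _ (fun m => 3 * r / R1 * (Rabs (q m) * R1 ^ m))); auto.
    rewrite Series_scal_l. fold K1.
    apply Rle_trans with (3 * rs / R1 * K1).
    apply Rmult_le_compat_r; auto. unfold Rdiv. apply Rmult_le_compat_r. left; apply Rinv_0_lt_compat; lra. lra.
    replace (3 * rs / R1 * K1) with (K1 / (5 * (K1 + 1))) by (rewrite <- Hrs15; field; lra).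
    apply Rmult_le_reg_r with (5 * (K1 + 1)); [lra|]. unfold Rdiv. rewrite Rmult_assoc, Rinv_l by lra. lra. }
  destruct (LS1 dl Hdl) as [d5 [Hd5 H5]].
  set (rho := Rmin rs (Rmin (dl / 3) (Rmin (1 / (48 * M + 1)) (Rmin d5 d2)))).
  assert (Hrho : 0 < rho).
  { unfold rho. repeat apply Rmin_pos; try lra. apply Rdiv_lt_0_compat; lra. }
  assert (Hrho1 : rho <= rs) by apply Rmin_l.
  assert (Hrho2 : rho <= dl / 3) by (unfold rho; eapply Rle_trans; [apply Rmin_r|apply Rmin_l]).
  assert (Hrho3 : rho <= 1 / (48 * M + 1)) by (unfold rho; eapply Rle_trans; [apply Rmin_r|eapply Rle_trans; [apply Rmin_r|apply Rmin_l]]).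
  assert (Hrho4 : rho <= d5) by (unfold rho; eapply Rle_trans; [apply Rmin_r|eapply Rle_trans; [apply Rmin_r|eapply Rle_trans; [apply Rmin_r|apply Rmin_l]]]).
  assert (Hrho5 : rho <= d2) by (unfold rho; eapply Rle_trans; [apply Rmin_r|eapply Rle_trans; [apply Rmin_r|eapply Rle_trans; [apply Rmin_r|apply Rmin_r]]]).
  assert (H3r : 3 * rho < r0).
  { assert (rs <= R1 / 15). { unfold rs. apply Rmult_le_compat_l. lra.
      apply Rinv_le_contravar; lra. } lra. }
  destruct (Kbound rho ltac:(lra)) as [Hqs HK].
  assert (Hcs : ex_series (fun m => Rabs (c m) * (3 * rho) ^ m)).
  { destruct (Ha1 (3 * rho)) as [E _]. rewrite Rabs_right; lra.
    rewrite Rabs_right in E by lra. auto. }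
  set (S := Sstar q).
  destruct (Sstar_bound q Hq0 rho ltac:(lra) Hqs HK) as [SB1 SB2].
  destruct (F_all q c rho ltac:(lra) Hqs Hcs S (Sstar00 q Hq0) SB1 SB2) as [[FA [s [mF NF]]] Fev].
  apply (analytic2_from_arr _ (Farr q c S) FA rho s); auto.
  intros x y Hx Hy.
  assert (Hx' : Rabs x <= rho) by lra. assert (Hy' : Rabs y <= rho) by lra.
  destruct (Sstar_eq q Hq0 rho ltac:(lra) Hqs HK x y Hx' Hy') as [E1 [E2 E3]].
  fold S in E1, E2, E3.
  destruct (Fev x y Hx' Hy') as [_ [_ E4]].
  rewrite E4.
  set (sg := ev S x y) in *.
  set (Qv := Series (fun m => q m * (y - sg) ^ m)) in *.
  set (ts := y - sg) in *.
  assert (Hts : Rabs ts <= dl) by lra.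
  assert (Hts0 : Rabs ts < r0) by lra.
  destruct (HQ ts Hts0) as [_ HDts]. fold Qv in HDts.
  destruct (Pb ts Hts) as [_ [Pb1 Pb2]].
  assert (Hsig : x = sg * (Derive z ts) ^ 2).
  { rewrite HDts. replace x with (sg + sg * (2 * Qv + Qv * Qv)) by lra. ring. }
  assert (Hdn : Derive z ts <> 0) by lra.
  assert (Hyt : y = x / (Derive z ts) ^ 2 + ts).
  { rewrite Hsig. unfold Rdiv. rewrite Rmult_assoc, Rinv_r by (apply pow_nonzero; auto).
    unfold ts. ring. }
  assert (Hxd5 : Rabs x < d5) by lra. assert (Hyd5 : Rabs y < d5) by lra.
  assert (Htt : Rabs (tt x y) <= dl) by (left; apply H5; auto).
  assert (Hxd2 : Rabs x < d2) by lra. assert (Hyd2 : Rabs y < d2) by lra.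
  assert (HM48 : 48 * M * Rabs x < 1).
  { apply Rle_lt_trans with (48 * M * (1 / (48 * M + 1))).
    apply Rmult_le_compat_l; lra.
    apply Rmult_lt_reg_r with (48 * M + 1); [lra|]. field_simplify; lra. }
  assert (Htteq : tt x y = ts).
  { apply (uniq_sol (Derive z) dl M x y); auto.
    intros w Hw; destruct (Pb w Hw) as [_ H]; auto. }
  unfold f_of. rewrite Htteq, HzP by auto. unfold PSeries.
  rewrite Hsig, HDts. field. rewrite <- HDts. lra.
Qed.


Theorem lemma13 (z : R -> R) (tt : R -> R -> R) :
  C2_near0 z -> Derive z 0 <> 0 -> local_solution z tt ->
  ((analytic2_near0 (f_of z tt) /\ sum_plus_O2_2 (f_of z tt)) <->
   (analytic1_near0 z /\ id_plus_O2_1 z)).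
Proof.
  intros HC _ Hls. split.
  - intros [A B]. apply (forward_dir z tt); auto.
  - intros [A B]. split. apply reverse_dir; auto. apply sum_O2; auto.
Qed.
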